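(* Let $\mathcal U$ be a two-dimensional update family with stable set $\mathcal S$. There exists a finite set $\mathcal Q\subset S^1$ such that for every pair $u,v$ of consecutive elements of $\mathcal S\cup\mathcal Q$ there exists an update rule $X\in\mathcal U$ with $$X\subset\big(\mathbb H_u\cup\ell_u\big)\cap\big(\mathbb H_v\cup\ell_v\big).$$
   Context: An update family is a finite collection $\mathcal U$ of finite subsets of $\mathbb Z^2\setminus\{0\}$ (update rules), acting by $A_{t+1}=A_t\cup\{x:x+X\subset A_t\text{ for some }X\in\mathcal U\}$, closure $[A]=\bigcup_tA_t$. For $u\in S^1$, $\mathbb H_u=\{x\in\mathbb Z^2:\langle x,u\rangle<0\}$ and $\ell_u=\{x\in\mathbb Z^2:\langle x,u\rangle=0\}$; $u$ is stable if $[\mathbb H_u]=\mathbb H_u$. For $\mathcal T\subset S^1$, elements $u,v\in\mathcal T$ are consecutive if $u\ne v$ and $\mathcal T\cap[u,v]=\{u,v\}$, where $[u,v]$ is the closed arc of $S^1$ from $u$ to $v$ (in a fixed orientation). *)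

(* Defs.v *)
From Stdlib Require Import Reals ZArith List.
Open Scope R_scope.

Definition pt := (Z * Z)%type.
Definition zset := pt -> Prop.
Definition padd (x y : pt) : pt := ((fst x + fst y)%Z, (snd x + snd y)%Z).

Definition rule := list pt.
Definition update_family (U : list rule) : Prop :=
  forall X, In X U -> forall x, In x X -> x <> (0%Z, 0%Z).

Definition step (U : list rule) (A : zset) : zset :=
  fun x => A x \/ exists X, In X U /\ forall y, In y X -> A (padd x y).
Fixpoint iter_step (U : list rule) (A : zset) (t : nat) : zset :=
  match t with
  | O => A
  | S t' => step U (iter_step U A t')
  end.
Definition closure (U : list rule) (A : zset) : zset :=
  fun x => exists t, iter_step U A t x.

Definition vec := (R * R)%type.
Definition on_S1 (u : vec) : Prop := fst u ^ 2 + snd u ^ 2 = 1.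

Definition ip (x : pt) (u : vec) : R :=
  IZR (fst x) * fst u + IZR (snd x) * snd u.

Definition H (u : vec) : zset := fun x => ip x u < 0.
Definition ell (u : vec) : zset := fun x => ip x u = 0.

Definition stable (U : list rule) (u : vec) : Prop :=
  on_S1 u /\ forall x, closure U (H u) x <-> H u x.

Definition rot (t : R) (u : vec) : vec :=
  (cos t * fst u - sin t * snd u, sin t * fst u + cos t * snd u).

(* w lies in the closed arc [u,v] of S^1 going counterclockwise from u to v:
   v = rot T u with T in [0, 2*PI) (T is unique), and w = rot t u, 0<=t<=T. *)
Definition in_arc (u v w : vec) : Prop :=
  exists T t, 0 <= T < 2 * PI /\ v = rot T u /\ 0 <= t <= T /\ w = rot t u.

Definition consecutive (T : vec -> Prop) (u v : vec) : Prop :=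
  T u /\ T v /\ u <> v /\ (forall w, T w -> in_arc u v w -> w = u \/ w = v).

(* Main.v *)
Require Import Defs.
From Stdlib Require Import Reals ZArith List Lra Lia Psatz Classical.
Open Scope R_scope.

Lemma cos_ne1 s : 0 < s < 2 * PI -> cos s <> 1.
Proof.
  intros Hs Hc.
  replace s with (2 * (s/2)) in Hc by field.
  rewrite cos_2a_sin in Hc.
  assert (0 < sin (s/2)) by (apply sin_gt_0; lra).
  nra.
Qed.

Lemma rot_dot t u : on_S1 u ->
  cos t = fst u * fst (rot t u) + snd u * snd (rot t u) /\
  sin t = fst u * snd (rot t u) - snd u * fst (rot t u).
Proof.
  unfold on_S1, rot; destruct u as [a b]; simpl; intros H1.
  split.
  - transitivity (cos t * (a^2+b^2)); [simpl; rewrite H1; ring| ring].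
  - transitivity (sin t * (a^2+b^2)); [simpl; rewrite H1; ring| ring].
Qed.

Lemma rot_S1 t u : on_S1 u -> on_S1 (rot t u).
Proof.
  unfold on_S1, rot; destruct u as [a b]; simpl; intros H1.
  pose proof (sin2_cos2 t). unfold Rsqr in *. nra.
Qed.

Lemma rot0 u : rot 0 u = u.
Proof. unfold rot; rewrite cos_0, sin_0; destruct u; simpl; f_equal; ring. Qed.

Lemma angle_exists u v : on_S1 u -> on_S1 v ->
  exists T, 0 <= T < 2 * PI /\ v = rot T u.
Proof.
  destruct u as [u1 u2], v as [v1 v2]; unfold on_S1, rot; simpl; intros Hu Hv.
  set (c := u1 * v1 + u2 * v2). set (s := u1 * v2 - u2 * v1).
  assert (Hcs : c * c + s * s = 1) by (unfold c, s; nra).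
  assert (Hc : -1 <= c <= 1) by nra.
  assert (Hs2 : sqrt (1 - c²) = Rabs s).
  { rewrite <- sqrt_Rsqr_abs. f_equal. unfold Rsqr; lra. }
  assert (Hrot : forall T, cos T = c -> sin T = s -> (v1, v2) = (cos T * u1 - sin T * u2, sin T * u1 + cos T * u2)).
  { intros T -> ->. unfold c, s. f_equal.
    - transitivity (v1 * (u1 * (u1 * 1) + u2 * (u2 * 1))); [rewrite Hu; ring | ring].
    - transitivity (v2 * (u1 * (u1 * 1) + u2 * (u2 * 1))); [rewrite Hu; ring | ring]. }
  destruct (Rle_lt_dec 0 s) as [Hs|Hs].
  - exists (acos c). pose proof (acos_bound c). pose proof PI_RGT_0. split. lra.
    apply Hrot. now apply cos_acos. rewrite sin_acos by auto. rewrite Hs2. apply Rabs_pos_eq; auto.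
  - assert (Hc' : -1 < c < 1) by nra.
    pose proof (acos_bound_lt c Hc').
    exists (2 * PI - acos c). split. lra.
    apply Hrot.
    + rewrite cos_minus, cos_2PI, sin_2PI, cos_acos by lra. ring.
    + rewrite sin_minus, cos_2PI, sin_2PI, sin_acos by lra. rewrite Hs2, Rabs_left by lra. ring.
Qed.

Lemma ip_add x y w : ip (padd x y) w = ip x w + ip y w.
Proof. unfold ip, padd; destruct x, y; simpl; rewrite !plus_IZR; ring. Qed.

Lemma stable_of U w : on_S1 w ->
  (forall X, In X U -> exists y, In y X /\ 0 <= ip y w) -> stable U w.
Proof.
  intros Hw HU; split; auto. intros x; split.
  - intros [t Ht]. revert x Ht. induction t; simpl; intros x Ht; auto.
    destruct Ht as [Ht|[X [HX Hall]]]; auto.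
    destruct (HU X HX) as [y [Hy Hy0]].
    specialize (IHt _ (Hall y Hy)). unfold H in *. rewrite ip_add in IHt. lra.
  - intros Hx. exists O. exact Hx.
Qed.

Lemma unstable_rule U w : on_S1 w -> ~ stable U w ->
  exists X, In X U /\ forall y, In y X -> ip y w < 0.
Proof.
  intros Hw Hns. apply NNPP; intros Hno. apply Hns, stable_of; auto.
  intros X HX. apply NNPP; intros Hne. apply Hno. exists X; split; auto.
  intros y Hy. apply Rnot_le_lt. intros Hle. apply Hne. eauto.
Qed.

Definition perp (y : pt) : list vec :=
  let a := IZR (fst y) in let b := IZR (snd y) in let n := sqrt (a*a + b*b) in
  (-b/n, a/n) :: (b/n, -a/n) :: nil.

Definition Qof (U : list rule) : list vec := flat_map (fun X => flat_map perp X) U.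

Lemma pos_norm (y : pt) : y <> (0%Z,0%Z) ->
  0 < IZR (fst y) * IZR (fst y) + IZR (snd y) * IZR (snd y).
Proof.
  destruct y as [p q]; simpl; intros Hy.
  destruct (Req_dec (IZR p) 0) as [Hp|Hp].
  - destruct (Req_dec (IZR q) 0) as [Hq|Hq].
    + apply eq_IZR_R0 in Hp; apply eq_IZR_R0 in Hq; subst; congruence.
    + nra.
  - nra.
Qed.

Lemma perp_S1 y q : y <> (0%Z,0%Z) -> In q (perp y) -> on_S1 q.
Proof.
  intros Hy Hq. pose proof (pos_norm y Hy) as Hn.
  unfold perp in Hq. set (a := IZR (fst y)) in *. set (b := IZR (snd y)) in *.
  pose proof (sqrt_lt_R0 _ Hn) as Hs. pose proof (sqrt_sqrt _ (Rlt_le _ _ Hn)) as Hss.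
  unfold on_S1.
  set (n := sqrt (a*a+b*b)) in *.
  destruct Hq as [<-|[<-|[]]]; simpl.
  - replace ((- b / n) * ((- b / n) * 1) + (a / n) * ((a / n) * 1)) with ((a*a+b*b)/(n*n)) by (field; lra).
    rewrite Hss; field; lra.
  - replace ((b / n) * ((b / n) * 1) + (- a / n) * ((- a / n) * 1)) with ((a*a+b*b)/(n*n)) by (field; lra).
    rewrite Hss; field; lra.
Qed.

Lemma perp_complete y w : y <> (0%Z,0%Z) -> on_S1 w -> ip y w = 0 -> In w (perp y).
Proof.
  intros Hy Hw Hip. pose proof (pos_norm y Hy) as Hn.
  unfold perp. destruct w as [c d]. unfold ip, on_S1 in *; simpl in *.
  set (a := IZR (fst y)) in *. set (b := IZR (snd y)) in *.
  set (n := sqrt (a*a+b*b)).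
  pose proof (sqrt_lt_R0 _ Hn) as Hs. pose proof (sqrt_sqrt _ (Rlt_le _ _ Hn)) as Hss.
  fold n in Hs, Hss.
  set (k := (a*d - b*c)/(a*a+b*b)).
  assert (Hc : c = -b * k).
  { unfold k. apply (Rmult_eq_reg_r (a*a+b*b)); [|lra].
    field_simplify; [|lra].
    transitivity (c*(a*a+b*b)); [ring|].
    transitivity (-b*(a*d-b*c) + a * (a*c+b*d)); [ring|]. rewrite Hip. ring. }
  assert (Hd : d = a * k).
  { unfold k. apply (Rmult_eq_reg_r (a*a+b*b)); [|lra].
    field_simplify; [|lra].
    transitivity (d*(a*a+b*b)); [ring|].
    transitivity (a*(a*d-b*c) + b * (a*c+b*d)); [ring|]. rewrite Hip. ring. }
  clearbody k n.
  assert (Hk : (k * n) * (k * n) = 1).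
  { replace ((k*n)*(k*n)) with (k*k*(n*n)) by ring. rewrite Hss.
    rewrite Hc, Hd in Hw. rewrite <- Hw. ring. }
  assert (Hkn : k * n = 1 \/ k * n = -1) by nra.
  assert (Hk2 : k = (k*n)/n) by (field; lra).
  rewrite Hc, Hd.
  destruct Hkn as [E|E]; rewrite E in Hk2; rewrite Hk2.
  - left. f_equal; field; lra.
  - right; left. f_equal; field; lra.
Qed.

Lemma f_cont (y : pt) (u : vec) : continuity (fun t => ip y (rot t u)).
Proof.
  unfold ip, rot; simpl.
  destruct y as [a b], u as [p q]; simpl.
  intros x. reg.
Qed.

Theorem mainTheorem7 (U : list rule) (hU : update_family U) :
  exists Q : list vec,
    (forall q, In q Q -> on_S1 q) /\
    forall u v,
      consecutive (fun w => stable U w \/ In w Q) u v ->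
      exists X, In X U /\
        forall x, In x X -> (H u x \/ ell u x) /\ (H v x \/ ell v x).
Proof.
  assert (HQ : forall q, In q (Qof U) -> on_S1 q).
  { intros q Hq. unfold Qof in Hq. apply in_flat_map in Hq as [X [HX Hq]].
    apply in_flat_map in Hq as [y [Hy Hq]]. exact (perp_S1 y q (hU X HX y Hy) Hq). }
  exists (Qof U). split; [exact HQ|].
  intros u v [Tu [Tv [Huv Hcons]]].
  set (TS := fun w => stable U w \/ In w (Qof U)) in *.
  assert (HS : forall w, TS w -> on_S1 w).
  { intros w [[Hw _]|Hw]; auto. }
  pose proof (HS u Tu) as Su. pose proof (HS v Tv) as Sv.
  destruct (angle_exists u v Su Sv) as [T [HT Hv]].
  assert (HT0 : 0 < T).
  { destruct (Req_dec T 0) as [E|E]; [|lra]. subst. rewrite rot0 in Huv. congruence. }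
  assert (Hnot : forall t, 0 < t < T -> ~ TS (rot t u)).
  { intros t Ht Hw. destruct (Hcons _ Hw) as [E|E].
    - exists T, t. repeat split; auto; lra.
    - destruct (rot_dot t u Su) as [C _]. rewrite E in C.
      apply (cos_ne1 t); [lra|]. rewrite C. destruct u; unfold on_S1 in Su; simpl in *. lra.
    - destruct (rot_dot t u Su) as [C S]. destruct (rot_dot T u Su) as [C' S'].
      rewrite E, Hv in C, S.  rewrite <- C' in C. rewrite <- S' in S.
      apply (cos_ne1 (T - t)); [lra|]. rewrite cos_minus, C, S.
      pose proof (sin2_cos2 T). unfold Rsqr in *. lra. }
  set (t0 := T / 2).
  assert (Ht0 : 0 < t0 < T) by (unfold t0; lra).
  assert (Hns : ~ stable U (rot t0 u)).
  { intros Hs. apply (Hnot t0 Ht0). left; exact Hs. }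
  destruct (unstable_rule U _ (rot_S1 t0 u Su) Hns) as [X [HX Hneg]].
  exists X; split; auto.
  intros y Hy.
  assert (Hz : forall z, 0 < z < T -> ip y (rot z u) <> 0).
  { intros z Hzz E. apply (Hnot z Hzz). right. unfold Qof. apply in_flat_map.
    exists X; split; auto. apply in_flat_map. exists y; split; auto.
    apply perp_complete; [exact (hU X HX y Hy)|apply rot_S1; auto|exact E]. }
  pose proof (Hneg y Hy) as Hf0.
  unfold H, ell. split.
  - destruct (Rle_lt_dec (ip y u) 0) as [Hle|Hlt].
    + destruct Hle; auto.
    + exfalso.
      destruct (IVT (fun t => - ip y (rot t u)) 0 t0) as [z [Hz1 Hz2]].
      * intros x. apply continuity_opp. apply f_cont.
      * lra.
      * rewrite rot0. lra.
      * lra.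
      * assert (z <> 0) by (intros ->; rewrite rot0 in Hz2; lra).
        assert (z <> t0) by (intros ->; lra).
        apply (Hz z); [lra|lra].
  - destruct (Rle_lt_dec (ip y v) 0) as [Hle|Hlt].
    + destruct Hle; auto.
    + exfalso.
      destruct (IVT (fun t => ip y (rot t u)) t0 T) as [z [Hz1 Hz2]].
      * apply f_cont.
      * lra.
      * lra.
      * rewrite <- Hv. lra.
      * assert (z <> T) by (intros ->; rewrite <- Hv in Hz2; lra).
        assert (z <> t0) by (intros ->; lra).
        apply (Hz z); [lra|lra].
Qed.
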